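(* Let $n>2$ be an integer and let $S\subseteq\mathbb{F}_2^n$ be nonempty. Then $$|\Delta(S)|\ \ge\ \frac{\log|S|}{2\log n}.$$
   Context: For $x,y\in\mathbb{F}_2^n$, the Hamming distance is $d_H(x,y)=\#\{i:x_i\neq y_i\}$, and $\Delta(S)=\{d_H(x,y):x,y\in S\}$ (pairs with $x=y$ allowed). Logarithms are to any fixed base greater than 1. *)

(* Defs.v *)
From mathcomp Require Import all_boot.
From Stdlib Require Import Reals.
Set Implicit Arguments. Unset Strict Implicit. Unset Printing Implicit Defensive.

Definition F2vec (n : nat) := {ffun 'I_n -> bool}.

Definition hamming (n : nat) (x y : F2vec n) : nat := #|[set i : 'I_n | x i != y i]|.

Definition dist_set (n : nat) (S : {set F2vec n}) : {set 'I_n.+1} :=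
  [set (inord (hamming x y) : 'I_n.+1) | x in S, y in S].

(* Main.v *)
Require Import Defs.
From mathcomp Require Import all_boot.
From Stdlib Require Import Reals Lra.
From mathcomp Require all_algebra.

Module Helper.
Import all_algebra.
Import GRing.Theory Num.Theory.
Local Open Scope ring_scope.

Section H.
Variables (n : nat) (S : {set F2vec n}).
Implicit Types y z : F2vec n.

Definition Dp : {set 'I_n.+1} := [set r in dist_set S | r != ord0].
Definition av (y : F2vec n) : rat := \sum_(i < n) ((y i : nat)%:R).
Definition bv (y : F2vec n) (i : 'I_n) : rat := 1 - 2 * (y i : nat)%:R.
Definition wv (j : 'I_n.+1) (z : F2vec n) : rat :=
  if unlift ord0 j is Some i then (z i : nat)%:R else 1.
Definition alv (y : F2vec n) (r : 'I_n.+1) (j : 'I_n.+1) : rat :=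
  if unlift ord0 j is Some i then - bv y i else (r : nat)%:R - av y.
Definition fv (y z : F2vec n) : rat :=
  \prod_(r in Dp) ((r : nat)%:R - (hamming y z)%:R).

Lemma ham_lin y z : (hamming y z)%:R = av y + \sum_i bv y i * (z i : nat)%:R :> rat.
Proof.
rewrite /hamming -sum1_card big_mkcond /= natr_sum /av -big_split /=.
apply: eq_bigr => i _; rewrite inE /bv.
by case: (y i); case: (z i) => /=; rewrite ?mulr0 ?mulr1 ?addr0 ?add0r //;
  rewrite -[2]/(1+1) opprD addrA subrr add0r addrC subrr.
Qed.

Lemma factor y z (r : 'I_n.+1) :
  (r : nat)%:R - (hamming y z)%:R = \sum_(j < n.+1) alv y r j * wv j z.
Proof.
rewrite big_ord_recl /alv /wv unlift_none mulr1 ham_lin opprD addrA.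
congr (_ + _); rewrite -sumrN; apply: eq_bigr => i _.
by rewrite liftK mulNr.
Qed.

Lemma ham_le y z : (hamming y z <= n)%nat.
Proof. by rewrite /hamming -[X in (_ <= X)%nat]card_ord max_card. Qed.

Lemma ham0 y : hamming y y = 0%nat.
Proof.
by apply/eqP; rewrite /hamming cards_eq0; apply/eqP/setP => i; rewrite !inE eqxx.
Qed.

Lemma ham_neq0 y z : y != z -> hamming y z != 0%nat.
Proof.
apply: contra; rewrite /hamming cards_eq0 => /eqP H.
apply/eqP/ffunP => i; apply/eqP; apply: negbNE.
have : i \notin [set i0 | y i0 != z i0] by rewrite H inE.
by rewrite inE.
Qed.

Lemma fv_off y z : y \in S -> z \in S -> y != z -> fv y z = 0.
Proof.
move=> yS zS yz.
pose r0 : 'I_n.+1 := inord (hamming y z).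
have r0E : (r0 : nat) = hamming y z by rewrite inordK // ltnS ham_le.
have r0D : r0 \in Dp.
  rewrite inE; apply/andP; split; first by apply: imset2_f.
  by apply/eqP => /(congr1 val) /=; rewrite r0E; apply/eqP/ham_neq0.
by rewrite /fv (bigD1 r0) //= r0E subrr mul0r.
Qed.

Lemma fv_diag y : fv y y != 0.
Proof.
rewrite /fv ham0; apply/prodf_neq0 => r; rewrite inE => /andP[_ r0].
rewrite subr0 pnatr_eq0; apply: contra r0 => /eqP h; apply/eqP/val_inj => /=.
by rewrite h.
Qed.

Definition M := {ffun 'I_#|Dp| -> 'I_n.+1}.

Lemma fv_exp y z : fv y z =
  \sum_(g : M) (\prod_t alv y (enum_val t) (g t)) * (\prod_t wv (g t) z).
Proof.
rewrite /fv big_enum_val /=.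
rewrite (eq_bigr (fun t => \sum_(j < n.+1) alv y (enum_val t) j * wv j z));
  last by move=> t _; rewrite factor.
rewrite bigA_distr_bigA /=; apply: eq_bigr => g _; by rewrite big_split.
Qed.

Lemma card_bound0 : leq #|S| (expn n.+1 #|Dp|).
Proof.
pose Fm : 'M[rat]_#|S| := \matrix_(i, j) fv (enum_val i) (enum_val j).
pose C : 'M[rat]_(#|S|, #|{: M}|) :=
  \matrix_(i, m) \prod_t alv (enum_val i) (enum_val t) ((enum_val m : M) t).
pose G : 'M[rat]_(#|{: M}|, #|S|) :=
  \matrix_(m, j) \prod_t wv ((enum_val m : M) t) (enum_val j).
have FCG : Fm = C *m G.
  apply/matrixP => i j; rewrite !mxE fv_exp.
  rewrite (big_enum_val (fun g : M => _)) /=.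
  by apply: eq_bigr => m _; rewrite !mxE.
have Fd : Fm = diag_mx (\row_i fv (enum_val i) (enum_val i)).
  apply/matrixP => i j; rewrite !mxE.
  case: eqVneq => [-> //|ij]; rewrite mulr0n fv_off ?enum_valP //.
  by apply: contra ij => /eqP /enum_val_inj ->.
have Fu : Fm \in unitmx.
  rewrite unitmxE Fd det_diag unitfE; apply/prodf_neq0 => i _.
  by rewrite mxE fv_diag.
have := mxrankM_maxl C G; rewrite -FCG (mxrank_unit Fu) => h.
apply: (leq_trans h); apply: (leq_trans (rank_leq_col C)).
by rewrite card_ffun !card_ord.
Qed.

Lemma card_bound : leq #|S| (expn n.+1 #|dist_set S|).
Proof.
apply: (leq_trans (card_bound0)); rewrite leq_pexp2l //.
by apply: subset_leq_card; apply/subsetP => r; rewrite inE => /andP[].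
Qed.
End H.
End Helper.

Lemma nat_bound (n : nat) (S : {set F2vec n}) :
  (2 < n)%N -> leq #|S| (expn n (muln 2 #|dist_set S|)).
Proof.
move=> n2; apply: (@leq_trans (expn n.+1 #|dist_set S|)); first exact: Helper.card_bound.
rewrite expnM.
have h : n < n * n by apply: ltn_Pmull; [apply: ltnW | apply: ltnW; apply: ltnW].
elim: #|dist_set S| => // d IH; rewrite expnS [X in _ <= X]expnS.
by apply: leq_mul => //; rewrite -mulnn.
Qed.

Lemma powE a b : Nat.pow a b = expn a b.
Proof. by elim: b => [|b IH] //=; rewrite expnS -IH multE. Qed.

Theorem lemma3p1 (n : nat) (S : {set F2vec n}) :
  (2 < n)%N -> S != set0 ->
  (ln (INR #|S|) / (2 * ln (INR n)) <= INR #|dist_set S|)%R.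
Proof.
move=> n2 S0.
have hb := @nat_bound n S n2.
have Sp : (0 < #|S|)%N by rewrite card_gt0.
have n1 : (1 < INR n)%R by apply: lt_1_INR; apply/ltP; apply: ltnW.
have lnp : (0 < ln (INR n))%R by rewrite -ln_1; apply: ln_increasing => //; lra.
have Sr : (0 < INR #|S|)%R by apply: lt_0_INR; apply/ltP.
have hR : (INR #|S| <= INR n ^ (2 * #|dist_set S|))%R.
  rewrite -pow_INR; apply: le_INR. apply/leP. rewrite powE. exact: hb.
have hl : (ln (INR #|S|) <= INR (2 * #|dist_set S|) * ln (INR n))%R.
  rewrite -ln_pow; last lra.
  case: (Rle_lt_or_eq_dec _ _ hR) => h; last by rewrite h; lra.
  by apply: Rlt_le; apply: ln_increasing.
rewrite mult_INR in hl.
apply: (Rmult_le_reg_r (2 * ln (INR n))); first lra.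
rewrite /Rdiv Rmult_assoc Rinv_l; last lra.
simpl INR in hl |- *; lra.
Qed.
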